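(* Let $\omega$ be a Poisson point process on $\mathbb{R}^2$ with intensity $1$ (law $\mathbb{P}$). Let $\xi$ be the exponent of transversal fluctuations (defined in the context), let $\gamma\in(\xi,1)$, $b\in(\gamma,1)$, and let $N$ be such that $N^b-4N^\gamma>0$. Let $\mathbf{v}_1=(1/\sqrt2,1/\sqrt2)$, $\mathbf{v}_2=(-1/\sqrt2,1/\sqrt2)$, $m_N=3N^\gamma\mathbf{v}_2$, and let $C_2=C(\gamma,N)+m_N$, where $C(\gamma,N)=\{(x,y)\,;\,0\le x+y\le 2N,\ -\sqrt{2}N^{\gamma}\le -x+y\le \sqrt{2}N^{\gamma}\}$. Let $A=(N^b+2N^\gamma)\mathbf{v}_1+2N^\gamma\mathbf{v}_2$ and $B=(N^b+4N^\gamma)\mathbf{v}_1+4N^\gamma\mathbf{v}_2$ (so the segment $AB$ is vertical with $A$ on the lower and $B$ on the upper side of $C_2$). Let $K=[8N^{2\gamma}]+1$ and divide $AB$ into $K$ equal segments with endpoints $z_0=A,z_1,\dots,z_K=B$. Let $L_i$ be the part of the horizontal line through $z_i$ lying in $C_2$, and let $F_i$ be the parallelogram in $C_2$ between $L_{i-1}$ and $L_i$, $i=1,\dots,K$. Let $t_N=\sqrt2N-6N^\gamma-2N^b$ and $F_i'=F_i+t_N\mathbf{v}_1$. Set $$D_N(\omega)=\max_{1\le i\le K}\omega(\bar F_i)+\max_{1\le j\le K}\omega(\bar F_j'),$$ where $\omega(F)$ is the number of Poisson points in $F$ and $\bar F$ is the closure. Then there is a numerical constant $C$ such that $$\mathbb{P}[D_N(\omega)\ge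 d]\le C(8N^{2\gamma}+1)e^{-d/2}$$ for all $d\ge1$.
   Context: Write $(x,y)\prec(x',y')$ if $x<x'$ and $y<y'$. For $w\prec w'$, an up/right path from $w$ to $w'$ is a sequence of Poisson points $\zeta_1\prec\cdots\prec\zeta_M$ with $w\prec\zeta_1$, $\zeta_M\prec w'$, of length $M$; $d(w,w';\omega)$ is the maximal length, and a maximal path attains it. With $w_N=(N,N)$, $A_N^\gamma$ is the event that every maximal path from $0$ to $w_N$ has all its points in $C(\gamma,N)$, and $\xi=\inf\{\gamma>0\,;\,\liminf_{N\to\infty}\mathbb{P}[A_N^\gamma]=1\}$ (it is a fact that $\xi<1$). $[x]$ denotes the integer part. *)

(* Defs.v *)
From HB Require Import structures.
From mathcomp Require Import all_boot all_order all_algebra.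
From mathcomp Require Import all_classical all_reals all_analysis.
Set Implicit Arguments. Unset Strict Implicit. Unset Printing Implicit Defensive.
Import Order.TTheory GRing.Theory Num.Theory.
Import numFieldNormedType.Exports.
Local Open Scope classical_set_scope.
Local Open Scope ring_scope.

Section poisson_lpp.
Variable R : realType.
Notation pt := (R * R)%type.

Definition padd (p q : pt) : pt := (p.1 + q.1, p.2 + q.2).
Definition pscale (a : R) (p : pt) : pt := (a * p.1, a * p.2).
Definition translate (F : set pt) (v : pt) : set pt :=
  [set p | F (padd p (pscale (-1) v))].

(* number of points of a set S (in \bar R, +oo if S is infinite):
   supremum of the sizes of finite duplicate-free lists of elements of S *)
Definition npts (S : set pt) : \bar R :=
  ereal_sup [set ((size s)%:R)%:E | s in [set s : seq pt | uniq s /\ (forall z, z \in s -> S z)]].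

Definition leb2 : set pt -> \bar R := (@lebesgue_measure R \x @lebesgue_measure R)%E.

Definition bounded_borel (A : set pt) : Prop :=
  measurable A /\ exists M : R, forall p, A p -> `|p.1| <= M /\ `|p.2| <= M.

Definition poisson_prob (l : R) (n : nat) : R := l ^+ n / (n`!)%:R * expR (- l).

Definition is_poisson_process (d : measure_display) (T : measurableType d)
    (P : probability T R) (omega : T -> set pt) : Prop :=
  (forall (A : set pt) (n : nat), bounded_borel A ->
      measurable [set t | npts (omega t `&` A) = (n%:R)%:E]) /\
  (forall (k : nat) (A : 'I_k -> set pt) (n : 'I_k -> nat),
      (forall i, bounded_borel (A i)) ->
      (forall i j, i != j -> A i `&` A j = set0) ->
      P [set t | forall i, npts (omega t `&` A i) = ((n i)%:R)%:E] =
      (\prod_(i < k) poisson_prob (fine (leb2 (A i))) (n i))%:E).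

Definition prec (p q : pt) : bool := (p.1 < q.1) && (p.2 < q.2).

Definition up_right_path (S : set pt) (w w' : pt) (s : seq pt) : Prop :=
  path prec w (rcons s w') /\ (forall z, z \in s -> S z).

Definition lpp (S : set pt) (w w' : pt) : \bar R :=
  ereal_sup [set ((size s)%:R)%:E | s in up_right_path S w w'].

Definition maximal_path (S : set pt) (w w' : pt) (s : seq pt) : Prop :=
  up_right_path S w w' s /\ ((size s)%:R)%:E = lpp S w w'.

Definition cyl (gamma N : R) : set pt :=
  [set p | 0 <= p.1 + p.2 <= 2 * N /\
           - (Num.sqrt 2 * N `^ gamma) <= - p.1 + p.2 <= Num.sqrt 2 * N `^ gamma].

Definition wN (N : nat) : pt := (N%:R, N%:R).

Definition event_A (d : measure_display) (T : measurableType d) (omega : T -> set pt)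
    (gamma : R) (N : nat) : set T :=
  [set t | forall s, maximal_path (omega t) (0, 0) (wN N) s ->
                     forall z, z \in s -> cyl gamma N%:R z].

Definition xi (d : measure_display) (T : measurableType d) (P : probability T R)
    (omega : T -> set pt) : R :=
  inf [set gamma : R | 0 < gamma /\
         limn_einf (fun N : nat => P (event_A omega gamma N)) = 1%E].

Definition v1 : pt := (1 / Num.sqrt 2, 1 / Num.sqrt 2).
Definition v2 : pt := (-1 / Num.sqrt 2, 1 / Num.sqrt 2).

Definition mN (gamma N : R) : pt := pscale (3 * N `^ gamma) v2.
Definition C2 (gamma N : R) : set pt := translate (cyl gamma N) (mN gamma N).
Definition ptA (gamma b N : R) : pt :=
  padd (pscale (N `^ b + 2 * N `^ gamma) v1) (pscale (2 * N `^ gamma) v2).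
Definition ptB (gamma b N : R) : pt :=
  padd (pscale (N `^ b + 4 * N `^ gamma) v1) (pscale (4 * N `^ gamma) v2).
Definition KN (gamma N : R) : nat := `|Num.floor (8 * N `^ (2 * gamma))|%N.+1.
Definition zpt (gamma b N : R) (i : nat) : pt :=
  padd (ptA gamma b N)
       (pscale (i%:R / (KN gamma N)%:R)
               (padd (ptB gamma b N) (pscale (-1) (ptA gamma b N)))).
Definition Lline (gamma b N : R) (i : nat) : set pt :=
  [set p | C2 gamma N p /\ p.2 = (zpt gamma b N i).2].
Definition Fpar (gamma b N : R) (i : nat) : set pt :=
  [set p | C2 gamma N p /\ (zpt gamma b N i.-1).2 <= p.2 <= (zpt gamma b N i).2].
Definition tN (gamma b N : R) : R :=
  Num.sqrt 2 * N - 6 * N `^ gamma - 2 * N `^ b.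
Definition Fpar' (gamma b N : R) (i : nat) : set pt :=
  translate (Fpar gamma b N i) (pscale (tN gamma b N) v1).

Definition DN (gamma b N : R) (S : set pt) : \bar R :=
  ((\big[maxe/-oo]_(1 <= i < (KN gamma N).+1) npts (S `&` closure (Fpar gamma b N i))) +
   (\big[maxe/-oo]_(1 <= j < (KN gamma N).+1) npts (S `&` closure (Fpar' gamma b N j))))%E.

End poisson_lpp.

(* Main.v *)
Require Import Defs.
From HB Require Import structures.
Set Warnings "-notation-overridden,-ambiguous-paths,-notation-incompatible-prefix".
From mathcomp Require Import all_boot all_order all_algebra.
From mathcomp Require Import all_classical all_reals all_analysis measurable_realfun.
Import Order.TTheory GRing.Theory Num.Theory.
Import numFieldNormedType.Exports.
Local Open Scope classical_set_scope.
Local Open Scope ring_scope.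
From mathcomp Require Import lra ring.

Section partA.
Variable R : realType.
Local Notation pt := (R * R)%type.
Local Open Scope ereal_scope.

Lemma npts_ge0 (S : set pt) : 0 <= npts S.
Proof.
apply: ereal_sup_ubound; exists [::] => //; split => //.
Qed.

Lemma npts_mono (S S' : set pt) : S `<=` S' -> npts S <= npts S'.
Proof.
move=> SS'; apply: ge_ereal_sup => _ [s [us Ss] <-].
apply: ereal_sup_ubound; exists s => //; split => // z /Ss; exact: SS'.
Qed.

Lemma npts_nat (S : set pt) : npts S = +oo \/ exists n : nat, npts S = (n%:R)%:E.
Proof.
have [[B HB]|nB] := pselect (exists B : nat, forall s : seq pt,
    uniq s /\ (forall z, z \in s -> S z) -> (size s <= B)%N).
  right.
  pose P := fun n : nat => `[< exists s : seq pt, (uniq s /\ (forall z, z \in s -> S z)) /\ size s = n >].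
  have exP : exists n, P n by exists 0%N; apply/asboolP; exists [::].
  have ubP : forall n, P n -> (n <= B)%N.
    by move=> n /asboolP [s [Hs <-]]; exact: HB.
  case: (ex_maxnP exP ubP) => m /asboolP [s [Hs Hsz]] Hmax.
  exists m; apply/le_anti/andP; split.
    apply: ge_ereal_sup => _ [s' Hs' <-]; rewrite lee_fin ler_nat.
    by apply: Hmax; apply/asboolP; exists s'.
  by apply: ereal_sup_ubound; exists s => //; rewrite Hsz.
left.
have H0 := npts_ge0 S.
case E: (npts S) => [r| |] //; last by rewrite E in H0.
exfalso; apply: nB; exists (Num.truncn r) => s Hs.
have : ((size s)%:R)%:E <= npts S by apply: ereal_sup_ubound; exists s.
rewrite E lee_fin => Hle.
have := truncnS_gt r => Hlt.
have : ((size s)%:R < (Num.truncn r).+1%:R :> R)%R by exact: le_lt_trans Hle Hlt.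
by rewrite ltr_nat ltnS.
Qed.

Lemma measurable_cstP (d : measure_display) (T : measurableType d) (Q : Prop) :
  measurable [set _ : T | Q].
Proof.
have [q|nq] := pselect Q.
  by rewrite (_ : [set _ | Q] = setT) //; apply/seteqP; split.
by rewrite (_ : [set _ | Q] = set0) //; apply/seteqP; split.
Qed.

Lemma count_meas (d : measure_display) (T : measurableType d) (P : probability T R)
  (omega : T -> set pt) (Hpp : is_poisson_process P omega) (A : set pt)
  (hA : bounded_borel A) :
  measurable_fun [set: T] ((fun t => npts (omega t `&` A)) : T -> \bar R).
Proof.
pose f : T -> \bar R := fun t => npts (omega t `&` A); rewrite -/f.
have mn : forall n : nat, measurable [set t | f t = (n%:R)%:E].
  by move=> n; exact: Hpp.1.
have moo : measurable [set t | f t = +oo].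
  rewrite (_ : [set t | f t = +oo] = ~` \bigcup_n [set t | f t = (n%:R)%:E]).
    by apply: measurableC; apply: bigcupT_measurable.
  apply/seteqP; split => t /=.
    by move=> Hoo [n _ /= Hn]; rewrite Hoo in Hn.
  move=> Hn; case: (npts_nat (omega t `&` A)) => // -[n Hfn].
  by exfalso; apply: Hn; exists n.
move=> _ Y mY; rewrite setTI.
rewrite (_ : f @^-1` Y = (\bigcup_n ([set t | f t = (n%:R)%:E] `&` [set _ | Y (n%:R)%:E]))
   `|` ([set t | f t = +oo] `&` [set _ | Y +oo])).
  apply: measurableU; last by apply: measurableI => //; exact: measurable_cstP.
  by apply: bigcupT_measurable => n; apply: measurableI => //; exact: measurable_cstP.
apply/seteqP; split => t /=.
  case: (npts_nat (omega t `&` A)) => [Hoo|[n Hn]] Yt.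
    by right; rewrite /f Hoo; split => //; rewrite -Hoo.
  by left; exists n => //; split => //=; rewrite -Hn.
by move=> [[n _ [/= Hn Yn]]|[/= Hoo Yoo]]; [rewrite Hn | rewrite Hoo].
Qed.
End partA.

Section partC.
Variable R : realType.
Local Notation pt := (R * R)%type.

Lemma exp_tail (lam : R) (m : nat) : 0 <= lam ->
  expR lam <= series (exp_coeff lam) m + expR (- m%:R) * expR (expR 1 * lam).
Proof.
move=> lam0.
have -> : expR lam = limn (series (exp_coeff lam)) by [].
apply: limr_le; first exact: is_cvg_series_exp_coeff.
exists m => // n /= mn.
rewrite /series /= (big_cat_nat (leq0n m) mn) /= lerD2l.
apply: (@le_trans _ _ (\sum_(m <= k < n) expR (- m%:R) * exp_coeff (expR 1 * lam) k)).
  apply: ler_sum_nat => k /andP[mk _] /=.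
  rewrite !exp_coeffE exprMn -expRM_natl mulr1.
  have -> : expR (- m%:R) * ((k`!%:R)^-1 * (expR k%:R * lam ^+ k)) =
     (expR (- m%:R) * expR k%:R) * ((k`!%:R)^-1 * lam ^+ k) by ring.
  apply: ler_peMl.
    by apply: mulr_ge0; [rewrite invr_ge0 | exact: exprn_ge0].
  rewrite -expRD; apply: (le_trans _ (expR_ge1Dx _)).
  by rewrite lerDl addrC subr_ge0 ler_nat.
rewrite -big_distrr /=; apply: ler_wpM2l; first exact: expR_ge0.
apply: (@le_trans _ _ (series (exp_coeff (expR 1 * lam)) n)).
  rewrite /series /= (big_cat_nat (leq0n m) mn) /= lerDr.
  apply: sumr_ge0 => k _; apply: exp_coeff_ge0; apply: mulr_ge0 => //; exact: expR_ge0.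
have -> : expR (expR 1 * lam) = limn (series (exp_coeff (expR 1 * lam))) by [].
apply: nondecreasing_cvgn_le; last exact: is_cvg_series_exp_coeff.
apply: nondecreasing_series => k _ _; apply: exp_coeff_ge0.
apply: mulr_ge0 => //; exact: expR_ge0.
Qed.

Lemma poisson_tail (lam : R) (m : nat) : 0 <= lam -> lam <= 2 ->
  1 - \sum_(i < m) Defs.poisson_prob lam i <= expR (2 * expR 1) * expR (- m%:R).
Proof.
move=> l0 l2.
have E : \sum_(i < m) Defs.poisson_prob lam i = expR (- lam) * series (exp_coeff lam) m.
  rewrite /series /= big_mkord mulr_sumr; apply: eq_bigr => i _.
  by rewrite /Defs.poisson_prob /= mulrC.
rewrite E.
have H := @exp_tail lam m l0.
have -> : 1 - expR (- lam) * series (exp_coeff lam) m =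
   expR (- lam) * (expR lam - series (exp_coeff lam) m).
  by rewrite mulrBr [expR (- lam) * expR lam]mulrC expRxMexpNx_1.
apply: (@le_trans _ _ (expR (- lam) * (expR (- m%:R) * expR (expR 1 * lam)))).
  by apply: ler_wpM2l; [exact: expR_ge0 | rewrite lerBlDl].
apply: (@le_trans _ _ (expR (- m%:R) * expR (expR 1 * lam))).
  rewrite -[X in _ <= X]mul1r; apply: ler_wpM2r.
    by apply: mulr_ge0; exact: expR_ge0.
  by rewrite expR_le1 oppr_le0.
rewrite mulrC; apply: ler_wpM2r; first exact: expR_ge0.
rewrite ler_expR mulrC; apply: ler_wpM2r => //; exact: expR_ge0.
Qed.

Local Open Scope ereal_scope.
Lemma count_tail (d : measure_display) (T : measurableType d) (P : probability T R)
  (omega : T -> set pt) (Hpp : is_poisson_process P omega) (A : set pt)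
  (hA : bounded_borel A) (hl : (fine (leb2 A) <= 2)%R) (m : nat) :
  P [set t | (m%:R)%:E <= npts (omega t `&` A)] <=
    (expR (2 * expR 1) * expR (- m%:R))%:E.
Proof.
pose f : T -> \bar R := fun t => npts (omega t `&` A).
pose F := fun i : nat => [set t | f t = (i%:R)%:E].
have mF : forall i, measurable (F i) by move=> i; exact: Hpp.1.
have -> : [set t | (m%:R)%:E <= npts (omega t `&` A)] =
    ~` \big[setU/set0]_(i < m) F i.
  rewrite -bigcup_mkord; apply/seteqP; split => t /=.
    move=> Hm [i /= im Hi].
    have Hm' : (m%:R)%:E <= f t := Hm.
    rewrite Hi lee_fin ler_nat in Hm'.
    by move: im; rewrite ltnNge Hm'.
  move=> Hn; case: (@npts_nat _ (omega t `&` A)) => [->|[n Hn']]; first exact: leey.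
  rewrite Hn' lee_fin ler_nat leqNgt; apply/negP => nm.
  by apply: Hn; exists n.
rewrite probability_setC; last by apply: bigsetU_measurable => i _; exact: mF.
have triv : trivIset [set: 'I_m] (fun i : 'I_m => F i).
  move=> i j _ _ [t [/= Hi Hj]]; apply: val_inj => /=.
  rewrite /F /= Hi in Hj; have := congr1 fine Hj; rewrite /= => /eqP; rewrite eqr_nat => /eqP; done.
rewrite (@measure_bigsetU_ord _ _ _ P m xpredT (fun i : 'I_m => F i)) //.
have lam0 : (0 <= fine (leb2 A))%R.
  by apply: fine_ge0; exact: measure_ge0.
have HP : forall i : nat, P (F i) = (Defs.poisson_prob (fine (leb2 A)) i)%:E.
  move=> i.
  have := Hpp.2 1%N (fun _ => A) (fun _ => i) (fun _ => hA).
  rewrite big_ord1 => <-.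
    congr (P _); apply/seteqP; split => t /=.
      by move=> Hi j.
    by move=> /(_ ord0).
  by move=> a b; rewrite !ord1 eqxx.
rewrite (eq_bigr (fun i : 'I_m => (Defs.poisson_prob (fine (leb2 A)) i)%:E)); last by move=> i _; exact: HP.
rewrite sumEFin -EFinB lee_fin.
exact: poisson_tail.
Qed.
End partC.
Section partE.
Variable R : realType.
Local Notation pt := (R * R)%type.

Lemma cfst : continuous (@fst R R).
Proof. move=> p; exact: cvg_fst. Qed.
Lemma csnd : continuous (@snd R R).
Proof. move=> p; exact: cvg_snd. Qed.
Lemma clin (a b c : R) : continuous (fun p : R * R => a * p.1 + b * p.2 + c).
Proof.
move=> p.
apply: (@cvgD _ _ _ _ _ (fun p : R * R => a * p.1 + b * p.2) (fun _ => c)); last exact: cvg_cst.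
apply: (@cvgD _ _ _ _ _ (fun p : R * R => a * p.1) (fun p => b * p.2)).
  apply: (@cvgM _ _ _ _ (fun _ => a) (@fst R R)); [exact: cvg_cst | exact: cfst].
apply: (@cvgM _ _ _ _ (fun _ => b) (@snd R R)); [exact: cvg_cst | exact: csnd].
Qed.

Definition half (a b c : R) : set pt := [set p | 0 <= a * p.1 + b * p.2 + c].

Lemma half_closed a b c : closed (half a b c).
Proof.
have -> : half a b c = (fun p : pt => a * p.1 + b * p.2 + c) @^-1` [set x | 0 <= x] by [].
by move: (clin a b c) => /continuous_closedP; apply; exact: closed_ge.
Qed.

Lemma mlin (a b c : R) : measurable_fun setT (fun p : pt => a * p.1 + b * p.2 + c).
Proof.
apply: (@measurable_funD _ _ _ _ (fun p : pt => a * p.1 + b * p.2) (fun _ => c)); last exact: measurable_cst.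
apply: (@measurable_funD _ _ _ _ (fun p : pt => a * p.1) (fun p => b * p.2)).
  apply: (@measurable_funM _ _ _ _ (fun _ => a) (@fst R R)); [exact: measurable_cst | exact: measurable_fst].
apply: (@measurable_funM _ _ _ _ (fun _ => b) (@snd R R)); [exact: measurable_cst | exact: measurable_snd].
Qed.

Lemma half_meas a b c : measurable (half a b c).
Proof.
have -> : half a b c = setT `&` (fun p : pt => a * p.1 + b * p.2 + c) @^-1` `[0, +oo[%classic.
  by apply/seteqP; split => p /=; rewrite /half /= in_itv /= andbT; [move=> -> | case].

by apply: mlin => //; exact: measurable_itv.
Qed.

Definition rect (x0 y0 w h : R) : set pt := `[x0, x0 + w]%classic `*` `[y0, y0 + h]%classic.

Lemma rect_meas x0 y0 w h : measurable (rect x0 y0 w h).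
Proof. by apply: measurableX; exact: measurable_itv. Qed.

Lemma rect_leb2 x0 y0 w h : 0 <= w -> 0 <= h -> leb2 (rect x0 y0 w h) = (w * h)%:E.
Proof.
move=> w0 h0; rewrite /leb2 /rect product_measure1E; try exact: measurable_itv.
have lm : forall a l : R, 0 <= l -> (@lebesgue_measure R) `[a, a + l]%classic = l%:E.
  move=> a l l0; rewrite lebesgue_measure_itv /= lte_fin.
  have [al|] := ltrP a (a + l); first by rewrite -EFinB; congr (_%:E); ring.
  by move=> hh; have -> : l = 0 by lra.
by rewrite EFinM; congr (_ * _)%E; [exact: lm | exact: lm].
Qed.

Lemma rect_bounded x0 y0 w h : exists M : R, forall p, rect x0 y0 w h p -> `|p.1| <= M /\ `|p.2| <= M.
Proof.
exists (`|x0| + `|w| + `|y0| + `|h|) => p [/=].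
rewrite !in_itv /= => /andP[a1 a2] /andP[b1 b2].
split.
- apply: (@le_trans _ _ (`|x0| + `|w|)).
    rewrite ler_norml; apply/andP; split.
      by have := ler_norm (- x0); rewrite normrN; have := normr_ge0 w; lra.
    by have := ler_norm x0; have := ler_norm w; lra.
  by have := normr_ge0 y0; have := normr_ge0 h; lra.
- apply: (@le_trans _ _ (`|y0| + `|h|)).
    rewrite ler_norml; apply/andP; split.
      by have := ler_norm (- y0); rewrite normrN; have := normr_ge0 h; lra.
    by have := ler_norm y0; have := ler_norm h; lra.
  by have := normr_ge0 x0; have := normr_ge0 w; lra.
Qed.

Lemma translateI (A B : set pt) v : translate (A `&` B) v = translate A v `&` translate B v.
Proof. by apply/seteqP; split => p. Qed.

Lemma translate_half a b c v :
  translate (half a b c) v = half a b (c + a * (-1 * v.1) + b * (-1 * v.2)).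
Proof.
apply/seteqP; split => p; rewrite /translate /half /padd /pscale /=.
  by have -> : a * p.1 + b * p.2 + (c + a * (-1 * v.1) + b * (-1 * v.2)) =
    a * (p.1 + -1 * v.1) + b * (p.2 + -1 * v.2) + c by ring.
by have -> : a * p.1 + b * p.2 + (c + a * (-1 * v.1) + b * (-1 * v.2)) =
    a * (p.1 + -1 * v.1) + b * (p.2 + -1 * v.2) + c by ring.
Qed.

Lemma translate_rect (F : set pt) x0 y0 w h v : F `<=` rect x0 y0 w h ->
  translate F v `<=` rect (x0 + v.1) (y0 + v.2) w h.
Proof.
move=> FR p /FR; rewrite /rect /padd /pscale /= !in_itv /=.
by case => /andP[a1 a2] /andP[b1 b2]; split; apply/andP; split; lra.
Qed.

Definition good (S : set pt) := closed S /\ measurable S.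

Lemma goodI A B : good A -> good B -> good (A `&` B).
Proof. by move=> [cA mA] [cB mB]; split; [exact: closedI | exact: measurableI]. Qed.

Lemma good_half a b c : good (half a b c).
Proof. by split; [exact: half_closed | exact: half_meas]. Qed.

Definition C2h (gamma N : R) : set pt :=
  let m := mN gamma N in
  half 1 1 (-(m.1 + m.2)) `&` half (-1) (-1) (2 * N + (m.1 + m.2)) `&`
  half (-1) 1 (Num.sqrt 2 * N `^ gamma + m.1 - m.2) `&`
  half 1 (-1) (Num.sqrt 2 * N `^ gamma - m.1 + m.2).

Lemma C2E gamma N : C2 gamma N = C2h gamma N.
Proof.
rewrite /C2h; set m := mN gamma N.
apply/seteqP; split => p; rewrite /C2 /translate /cyl /half /padd /pscale -/m /=.
  by case => /andP[h1 h2] /andP[h3 h4]; repeat split; lra.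
by case => [[[h1 h2] h3] h4]; split; apply/andP; split; lra.
Qed.

Definition Fh (gamma b N : R) (i : nat) : set pt :=
  C2h gamma N `&` half 0 1 (- (zpt gamma b N i.-1).2) `&` half 0 (-1) ((zpt gamma b N i).2).

Lemma FparE gamma b N i : Fpar gamma b N i = Fh gamma b N i.
Proof.
rewrite /Fh -C2E; apply/seteqP; split => p; rewrite /Fpar /half /=.
  by case => H /andP[h1 h2]; repeat split => //; lra.
by case => [[H h1] h2]; split => //; apply/andP; split; lra.
Qed.

Lemma good_C2h gamma N : good (C2h gamma N).
Proof. by rewrite /C2h; repeat apply: goodI; exact: good_half. Qed.

Lemma good_Fpar gamma b N i : good (Fpar gamma b N i).
Proof. by rewrite FparE /Fh; repeat apply: goodI; (exact: good_C2h || exact: good_half). Qed.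

Lemma good_Fpar' gamma b N i : good (Fpar' gamma b N i).
Proof.
rewrite /Fpar' FparE /Fh /C2h !translateI !translate_half.
by repeat apply: goodI; exact: good_half.
Qed.


Lemma powR2 (N g : R) : N `^ (2 * g) = (N `^ g) ^+ 2.
Proof. by rewrite mulrC powRrM -powR_mulrn // powR_ge0. Qed.

Lemma KN_bounds gamma (N : R) :
  8 * (N `^ gamma) ^+ 2 < (KN gamma N)%:R /\ (KN gamma N)%:R <= 8 * N `^ (2 * gamma) + 1.
Proof.
rewrite -powR2 /KN.
set x := 8 * N `^ (2 * gamma).
have x0 : 0 <= x by rewrite /x mulr_ge0 // powR_ge0.
have f0 : (0 <= Num.floor x)%R by rewrite floor_ge0.
rewrite -addn1 natrD natr_absz ger0_norm //.
have := floor_le x; have := floorD1_gt x; rewrite intrD /=.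
by split; lra.
Qed.

Lemma zpt_diff gamma b (N : R) i :
  (zpt gamma b N i.+1).2 - (zpt gamma b N i).2 =
    4 * N `^ gamma / (Num.sqrt 2 * (KN gamma N)%:R).
Proof.
rewrite /zpt /ptA /ptB /padd /pscale /v1 /v2 /= -addn1 natrD.
have s0 : Num.sqrt 2 != 0 :> R by rewrite gt_eqF // sqrtr_gt0.
have k0 : (KN gamma N)%:R != 0 :> R by rewrite pnatr_eq0.
field.
by rewrite s0 k0.
Qed.

Definition hh gamma (N : R) := 4 * N `^ gamma / (Num.sqrt 2 * (KN gamma N)%:R).
Definition ww gamma (N : R) := hh gamma N + 2 * Num.sqrt 2 * N `^ gamma.

Lemma area_le gamma (N : R) : 0 <= hh gamma N /\ 0 <= ww gamma N /\ ww gamma N * hh gamma N <= 2.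
Proof.
rewrite /ww /hh.
set g := N `^ gamma; set s := Num.sqrt 2; set K := (KN gamma N)%:R.
have g0 : 0 <= g by exact: powR_ge0.
have s0 : 0 < s by rewrite sqrtr_gt0.
have ss : s * s = 2 by rewrite -expr2 sqr_sqrtr.
have [Kg _] := KN_bounds gamma N; rewrite -/g -/K in Kg.
have K1 : 1 <= K by rewrite /K /KN ler1n.
have K0 : 0 < K by lra.
have h0 : 0 <= 4 * g / (s * K) by rewrite divr_ge0 ?mulr_ge0 //; lra.
split => //; split; first by have := mulr_ge0 (mulr_ge0 (ler0n R 2) (ltW s0)) g0; lra.
set u := 8 * g ^+ 2 / K.
have u0 : 0 <= u by rewrite /u divr_ge0 // ?mulr_ge0 ?exprn_ge0 //; lra.
have u1 : u <= 1 by rewrite /u ler_pdivrMr //; lra.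
have sne : s != 0 by rewrite gt_eqF.
have Kne : K != 0 by rewrite gt_eqF.
have e1 : 2 * s * g * (4 * g / (s * K)) = u.
  by rewrite /u; field; rewrite ?sne ?Kne.
have e2 : 4 * g / (s * K) * (4 * g / (s * K)) = u / K.
  have -> : 4 * g / (s * K) * (4 * g / (s * K)) = 16 * g ^+ 2 / ((s * s) * (K * K)).
    by field; rewrite ?sne ?Kne.
  by rewrite ss /u; field; rewrite ?sne ?Kne.
have uK : u / K <= u by rewrite ler_pdivrMr // ler_peMr.
rewrite mulrDl e2 mulrC e1; lra.
Qed.

Lemma Fpar_sub gamma b (N : R) i :
  let m := mN gamma N in
  let y0 := (zpt gamma b N i).2 in
  Fpar gamma b N i.+1 `<=`
    rect (y0 + m.1 - m.2 - Num.sqrt 2 * N `^ gamma) y0 (ww gamma N) (hh gamma N).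
Proof.
move=> m y0 p; rewrite FparE /Fh /C2h -/m.
case => [[[[[h1 h2] h3] h4] h5] h6].
move: h1 h2 h3 h4 h5 h6; rewrite /half.
change (i.+1.-1) with i; rewrite -/y0 => h1 h2 h3 h4 h5 h6.
have := zpt_diff gamma b N i; rewrite -/(hh gamma N) -/y0 => hd.
split; rewrite /= in_itv /=; apply/andP; split; rewrite /ww; rewrite /= in h1 h2 h3 h4 h5 h6 hd *; lra.
Qed.
End partE.
Section partF.
Variable R : realType.
Local Notation pt := (R * R)%type.
Local Open Scope ereal_scope.

Lemma bigmax_lt (I : eqType) (s : seq I) (P : pred I) (F : I -> \bar R) (x : \bar R) :
  -oo < x -> (forall i, i \in s -> P i -> F i < x) ->
  \big[maxe/-oo]_(i <- s | P i) F i < x.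
Proof.
move=> x0; elim: s => [|a s IH] H; first by rewrite big_nil.
rewrite big_cons; case: ifP => Pa.
  rewrite gt_max; apply/andP; split; first by apply: H => //; rewrite mem_head.
  by apply: IH => i iS Pi; apply: H => //; rewrite in_cons iS orbT.
by apply: IH => i iS Pi; apply: H => //; rewrite in_cons iS orbT.
Qed.

Lemma bigmax_meas (d : measure_display) (T : measurableType d) (I : eqType) (s : seq I)
  (P : pred I) (F : I -> T -> \bar R) :
  (forall i, i \in s -> measurable_fun setT (F i)) ->
  measurable_fun setT (fun t => \big[maxe/-oo]_(i <- s | P i) F i t).
Proof.
elim: s => [|a s IH] mF.
  under eq_fun do rewrite big_nil; exact: measurable_cst.
have mF' : forall i, i \in s -> measurable_fun setT (F i).
  by move=> i iS; apply: mF; rewrite in_cons iS orbT.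
under eq_fun do rewrite big_cons.
case: (P a).
  exact: (measurable_maxe (mF a (mem_head a s)) (IH mF')).
exact: IH.
Qed.


Lemma tail_gen (d : measure_display) (T : measurableType d) (P : probability T R)
  (omega : T -> set pt) (Hpp : is_poisson_process P omega) (A : set pt)
  (gamma N x0 y0 : R) (hA : bounded_borel A)
  (sub : A `<=` rect R x0 y0 (ww R gamma N) (hh R gamma N)) (r : R) (r0 : (0 <= r)%R) :
  P [set t | r%:E <= npts (omega t `&` A)] <= (expR (2 * expR 1) * expR (- r))%:E.
Proof.
set Rc := rect R x0 y0 (ww R gamma N) (hh R gamma N).
have hR : bounded_borel Rc by split; [exact: rect_meas | exact: rect_bounded].
have [h0 [w0 wh]] := @area_le R gamma N.
have hl : (fine (leb2 Rc) <= 2)%R by rewrite /Rc rect_leb2.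
pose m := `|Num.ceil r|%N.
have c0 : (0 <= Num.ceil r)%R by rewrite ceil_ge0; lra.
have mr : (r <= m%:R)%R by rewrite /m natr_absz ger0_norm // ceil_ge.
apply: (@le_trans _ _ (P [set t | (m%:R)%:E <= npts (omega t `&` Rc)])); last first.
  apply: (le_trans (@count_tail R _ _ P omega Hpp Rc hR hl m)).
  rewrite lee_fin; apply: ler_wpM2l; first exact: expR_ge0.
  by rewrite ler_expR lerN2.
apply: le_measure; rewrite ?inE.
- have := emeasurable_fun_c_infty measurableT (@count_meas R _ _ P omega Hpp A hA) r%:E.
  by rewrite setTI.
- have := emeasurable_fun_c_infty measurableT (@count_meas R _ _ P omega Hpp Rc hR) (m%:R)%:E.
  by rewrite setTI.
move=> t /= Hr.
have Hle : npts (omega t `&` A) <= npts (omega t `&` Rc).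
  by apply: npts_mono; apply: setIS.
have HZ := le_trans Hr Hle.
case: (@npts_nat R (omega t `&` Rc)) => [->|[n Hn]]; first exact: leey.
rewrite Hn in HZ *; rewrite lee_fin in HZ; rewrite lee_fin ler_nat.
have : (Num.ceil r <= n%:Z)%R by rewrite ceil_le_int.
by rewrite -(ler_nat R) /m natr_absz ger0_norm // -[n%:R]/(n%:Z%:~R) ler_int.
Qed.


Lemma Fpar'_sub gamma b (N : R) i :
  let m := mN gamma N in
  let y0 := (zpt gamma b N i).2 in
  let v := pscale (tN gamma b N) (v1 R) in
  Fpar' gamma b N i.+1 `<=`
    rect R (y0 + m.1 - m.2 - Num.sqrt 2 * N `^ gamma + v.1) (y0 + v.2) (ww R gamma N) (hh R gamma N).
Proof. move=> m y0 v; apply: translate_rect; exact: Fpar_sub. Qed.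

Lemma rect_bb (A : set pt) x0 y0 w h : good R A -> A `<=` rect R x0 y0 w h -> bounded_borel A.
Proof.
move=> [_ mA] sub; split => //.
have [M HM] := @rect_bounded R x0 y0 w h.
by exists M => p /sub /HM.
Qed.

Lemma good_closure (A : set pt) : good R A -> closure A = A.
Proof. by move=> [cA _]; apply/esym/closure_id. Qed.
End partF.

Theorem lemma2p1 (R : realType) :
  exists C : R, forall (dsp : measure_display) (T : measurableType dsp)
    (P : probability T R) (omega : T -> set (R * R)),
    is_poisson_process P omega ->
    forall (gamma b : R) (N : nat) (d : R),
      xi P omega < gamma -> gamma < 1 ->
      gamma < b -> b < 1 ->
      0 < N%:R `^ b - 4 * N%:R `^ gamma ->
      1 <= d ->
      (P [set t | d%:E <= DN gamma b N%:R (omega t)] <=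
        (C * (8 * N%:R `^ (2 * gamma) + 1) * expR (- d / 2))%:E)%E.
Proof.
exists (2 * expR (2 * expR 1)) => dsp T P omega Hpp gamma b N d _ _ _ _ _ d1.
set Nr : R := N%:R.
set K := KN gamma Nr.
set c := expR (2 * expR 1).
set r := d / 2.
have r0 : 0 <= r by rewrite /r; lra.
pose X i t := npts (omega t `&` closure (Fpar gamma b Nr i)).
pose Y i t := npts (omega t `&` closure (Fpar' gamma b Nr i)).
have bbF : forall i, bounded_borel (closure (Fpar gamma b Nr i.+1)).
  move=> i; rewrite good_closure; last exact: good_Fpar.
  apply: rect_bb; [exact: good_Fpar | exact: Fpar_sub].
have bbF' : forall i, bounded_borel (closure (Fpar' gamma b Nr i.+1)).
  move=> i; rewrite good_closure; last exact: good_Fpar'.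
  apply: rect_bb; [exact: good_Fpar' | exact: Fpar'_sub].
have mX : forall i, measurable_fun setT (X i.+1) by move=> i; exact: (@count_meas R _ _ P omega Hpp _ (bbF i)).
have mY : forall i, measurable_fun setT (Y i.+1) by move=> i; exact: (@count_meas R _ _ P omega Hpp _ (bbF' i)).
have tX : forall i, (P [set t | r%:E <= X i.+1 t] <= (c * expR (- r))%:E)%E.
  move=> i; apply: (@tail_gen R _ _ P omega Hpp _ _ _ _ _ (bbF i) _ r r0).
  rewrite good_closure; last exact: good_Fpar.
  exact: Fpar_sub.
have tY : forall i, (P [set t | r%:E <= Y i.+1 t] <= (c * expR (- r))%:E)%E.
  move=> i; apply: (@tail_gen R _ _ P omega Hpp _ _ _ _ _ (bbF' i) _ r r0).
  rewrite good_closure; last exact: good_Fpar'.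
  exact: Fpar'_sub.
pose EX i := [set t | (r%:E <= X i.+1 t)%E].
pose EY i := [set t | (r%:E <= Y i.+1 t)%E].
have mEX : forall i, measurable (EX i).
  by move=> i; have := emeasurable_fun_c_infty measurableT (mX i) r%:E; rewrite setTI.
have mEY : forall i, measurable (EY i).
  by move=> i; have := emeasurable_fun_c_infty measurableT (mY i) r%:E; rewrite setTI.
pose U1 := \big[setU/set0]_(i < K) EX i.
pose U2 := \big[setU/set0]_(i < K) EY i.
have mU1 : measurable U1 by apply: bigsetU_measurable => i _; exact: mEX.
have mU2 : measurable U2 by apply: bigsetU_measurable => i _; exact: mEY.
have mDN : measurable_fun setT (fun t => DN gamma b Nr (omega t)).
  have h1 : measurable_fun setT (fun t => (\big[maxe/-oo]_(1 <= i < K.+1) X i t)%E).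
    apply: bigmax_meas => i; rewrite mem_index_iota; case: i => // i _; exact: mX.
  have h2 : measurable_fun setT (fun t => (\big[maxe/-oo]_(1 <= j < K.+1) Y j t)%E).
    apply: bigmax_meas => i; rewrite mem_index_iota; case: i => // i _; exact: mY.
  exact: (emeasurable_funD h1 h2).
have mE : measurable [set t | (d%:E <= DN gamma b Nr (omega t))%E].
  by have := emeasurable_fun_c_infty measurableT mDN d%:E; rewrite setTI.
have sub : [set t | (d%:E <= DN gamma b Nr (omega t))%E] `<=` U1 `|` U2.
  move=> t /= Ht.
  have [//|nU] := pselect ((U1 `|` U2) t).
  exfalso.
  have hX : forall i, (i < K)%N -> (X i.+1 t < r%:E)%E.
    move=> i iK; rewrite ltNge; apply/negP => Hi; apply: nU; left.
    by rewrite /U1 -bigcup_mkord; exists i.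
  have hY : forall i, (i < K)%N -> (Y i.+1 t < r%:E)%E.
    move=> i iK; rewrite ltNge; apply/negP => Hi; apply: nU; right.
    by rewrite /U2 -bigcup_mkord; exists i.
  have mx : ((\big[maxe/-oo]_(1 <= i < K.+1) X i t) < r%:E)%E.
    apply: bigmax_lt; first exact: ltNyr.
    move=> i; rewrite mem_index_iota; case: i => // i /andP[_ iK] _.
    by apply: hX; rewrite -ltnS.
  have my : ((\big[maxe/-oo]_(1 <= i < K.+1) Y i t) < r%:E)%E.
    apply: bigmax_lt; first exact: ltNyr.
    move=> i; rewrite mem_index_iota; case: i => // i /andP[_ iK] _.
    by apply: hY; rewrite -ltnS.
  have := lteD mx my; rewrite -EFinD (_ : r + r = d); last by rewrite /r; field.
  move=> Hlt; have := lt_le_trans Hlt Ht.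
  by rewrite ltxx.
have sumb : forall (E : nat -> set T), (forall i, measurable (E i)) ->
    (forall i, (P (E i) <= (c * expR (- r))%:E)%E) ->
    (P (\big[setU/set0]_(i < K) E i) <= ((c * expR (- r)) *+ K)%:E)%E.
  move=> E mE' hE.
  apply: (le_trans (Boole_inequality P (fun i _ => mE' i))).
  rewrite -[in X in (_ <= X)%E](card_ord K) -sumr_const -sumEFin; apply: lee_sum => i _; exact: hE.
apply: (@le_trans _ _ (P (U1 `|` U2))).
  apply: le_measure; rewrite ?inE //; exact: measurableU.
apply: (le_trans (measureU2 P mU1 mU2)).
have s1 : (P U1 <= ((c * expR (- r)) *+ K)%:E)%E := sumb EX mEX tX.
have s2 : (P U2 <= ((c * expR (- r)) *+ K)%:E)%E := sumb EY mEY tY.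
apply: (le_trans (leeD s1 s2)).
rewrite -EFinD lee_fin.
have -> : - d / 2 = - r by rewrite /r mulNr.
have [_ KB] := @KN_bounds R gamma Nr; rewrite -/K in KB.
have a0 : 0 <= c * expR (- r) by rewrite mulr_ge0 // expR_ge0.
move: a0 KB.
set a := c * expR (- r); set B := 8 * Nr `^ (2 * gamma) + 1 => a0 KB.
have -> : 2 * c * B * expR (- r) = 2 * a * B by rewrite /a; ring.
rewrite -[a *+ K]mulr_natr.
have -> : a * K%:R + a * K%:R = 2 * a * K%:R by ring.
apply: ler_wpM2l => //; rewrite mulr_ge0 //.
Qed.
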